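(* If $H$ is a finite simple connected graph of order at least $3$, then the Cartesian product $K_2 \,\square\, H$ is not well-dominated.
   Context: A graph is well-dominated if every minimal (with respect to inclusion) dominating set is a minimum dominating set. The Cartesian product $G\,\square\, H$ has vertex set $V(G)\times V(H)$, with $(g_1,h_1)$ adjacent to $(g_2,h_2)$ iff either ($g_1=g_2$ and $h_1h_2\in E(H)$) or ($h_1=h_2$ and $g_1g_2\in E(G)$). *)

(* Defs.v *)
From mathcomp Require Import all_boot.
Set Implicit Arguments. Unset Strict Implicit. Unset Printing Implicit Defensive.

Definition simple_graph (T : finType) (e : rel T) : Prop :=
  symmetric e /\ irreflexive e.

Definition connected_graph (T : finType) (e : rel T) : Prop :=
  forall x y : T, connect e x y.

Definition K2_rel : rel bool := fun a b => a != b.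

Definition cart_rel (T1 T2 : finType) (e1 : rel T1) (e2 : rel T2)
  : rel (T1 * T2) :=
  fun u v => ((u.1 == v.1) && e2 u.2 v.2) || ((u.2 == v.2) && e1 u.1 v.1).

Definition dominating (T : finType) (e : rel T) (D : {set T}) : bool :=
  [forall v, (v \in D) || [exists u in D, e v u]].

Definition minimal_dominating (T : finType) (e : rel T) (D : {set T}) : bool :=
  dominating e D && [forall D' : {set T}, (D' \proper D) ==> ~~ dominating e D'].

Definition minimum_dominating (T : finType) (e : rel T) (D : {set T}) : bool :=
  dominating e D && [forall D' : {set T}, dominating e D' ==> (#|D| <= #|D'|)].

Definition well_dominated (T : finType) (e : rel T) : Prop :=
  forall D : {set T}, minimal_dominating e D -> minimum_dominating e D.

(* Main.v *)
Require Import Defs.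
From mathcomp Require Import all_boot.

Lemma deg2 (T : finType) (e : rel T) :
  simple_graph e -> connected_graph e -> 3 <= #|T| ->
  exists v a b, [&& e v a, e v b & a != b].
Proof.
move=> [sym irr] con c3.
case: (boolP [exists v, exists a, exists b, [&& e v a, e v b & a != b]]).
  by move=> /existsP[v /existsP[a /existsP[b H]]]; exists v, a, b.
move=> /negP Hn.
have uniq1 : forall v a b, e v a -> e v b -> a = b.
  move=> v a b ea eb; apply/eqP; apply/negPn/negP => nab; apply: Hn.
  by apply/existsP; exists v; apply/existsP; exists a; apply/existsP; exists b; rewrite ea eb.
have [x _] : exists x : T, true.
  by case: (pickP T) => [x _|/eq_card0 H]; [exists x | move: c3; rewrite H].
have [z zx] : exists z, z != x.
  case: (pickP (predC1 x)) => [z /= zx|H]; first by exists z.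
  have : #|predC1 x| = 0 by apply: eq_card0.
  rewrite cardC1 => H1; have c0 : 0 < #|T| by apply: leq_trans c3.
  by move: c3; rewrite -(prednK c0) H1.
have [y exy] : exists y, e x y.
  move: (con x z) => /connectP[p pp zl].
  case: p pp zl => [|y p] /=; first by move=> _ zE; move: zx; rewrite zE eqxx.
  by move=> /andP[exy _] _; exists y.
pose A := [set x; y].
have h1 : forall u w, e u w -> u \in A -> w \in A.
  move=> u w euw; rewrite !inE => /orP[]/eqP uE; subst u.
    by rewrite (uniq1 _ _ _ euw exy) eqxx orbT.
  by rewrite (uniq1 _ _ _ euw (_ : e y x)) ?eqxx // sym.
have cl : closed e (mem A).
  move=> u w euw /=; apply/idP/idP; first exact: h1.
  by apply: h1; rewrite sym.
have [w wA] : exists w, w \notin A.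
  case: (pickP (predC (mem A))) => [w /= wA|H]; first by exists w.
  have : #|A| = #|T|.
    have -> : A = setT by apply/setP => t; rewrite in_setT; move: (H t); rewrite /= => /negbFE.
    by rewrite cardsT.
  move: (cards2 x y) => ->; move=> E; move: c3; rewrite -E.
  by case: (x != y).
by move: (closed_connect cl (con x w)); rewrite /= (negbTE wA) !inE eqxx.
Qed.

Theorem proposition22 (T : finType) (e : rel T) :
  simple_graph e -> connected_graph e -> 3 <= #|T| ->
  ~ well_dominated (cart_rel K2_rel e).
Proof.
move=> sg con c3 wd.
have [v [a [b /and3P[eva evb nab]]]] := @deg2 T e sg con c3.
case: sg => sym irr.
have nva : v != a by apply/eqP => E; move: eva; rewrite E irr.
have nvb : v != b by apply/eqP => E; move: evb; rewrite E irr.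
pose S : {set bool * T} := setX [set false] setT.
have inS : forall c h, ((c, h) \in S) = ~~ c.
  by move=> c h; rewrite !inE andbT; case: c.
have Sdom : dominating (cart_rel K2_rel e) S.
  apply/forallP => -[c h]; rewrite inS; case: c => //=.
  apply/existsP; exists (false, h); rewrite inS /cart_rel /K2_rel /= eqxx.
  by [].
have Smin : minimal_dominating (cart_rel K2_rel e) S.
  rewrite /minimal_dominating Sdom /=; apply/forallP => D'; apply/implyP.
  move=> /properP[sub [[c h] inS' notin]].
  move: inS'; rewrite inS; case: c notin => //= notin _.
  apply/negP => /forallP /(_ (true, h)) /orP[].
    by move=> /(subsetP sub); rewrite inS.
  move=> /existsP[[c' h'] /andP[inD]].
  have := subsetP sub _ inD; rewrite inS; case: c' inD => //= inD _.
  rewrite /cart_rel /K2_rel /= andbT.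
  by move=> /eqP hE; move: notin; rewrite hE inD.
have := wd _ Smin => /andP[_ /forallP Hm].
pose D : {set bool * T} := (true, b) |: ((S :\ (false, v)) :\ (false, b)).
have Ddom : dominating (cart_rel K2_rel e) D.
  apply/forallP => -[c h].
  have inD : forall c' h', ((c', h') \in D) =
     ((c' && (h' == b)) || [&& ~~ c', h' != v & h' != b]).
    move=> c' h'; rewrite !inE /=; case: c' => //=.
    by rewrite andbT andbC.
  rewrite inD.
  case: c => /=.
    case: (eqVneq h b) => [->|hb] //=.
    apply/existsP; case: (eqVneq h v) => [->|hv].
      by exists (true, b); rewrite inD eqxx /cart_rel /= evb.
    exists (false, h); rewrite inD /= hv hb /cart_rel /K2_rel /= eqxx.
    by [].
  case: (eqVneq h v) => [->|hv] /=.
    apply/existsP; exists (false, a); rewrite inD /= eq_sym nva nab.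
    by rewrite /cart_rel /= eva.
  case: (eqVneq h b) => [->|hb] //=.
  apply/existsP; exists (true, b); rewrite inD eqxx /cart_rel /K2_rel /= eqxx.
  by [].
have := Hm D; rewrite Ddom /= => le.
have cS : #|S| = #|T| by rewrite cardsX cards1 cardsT mul1n.
have : #|D| < #|S|.
  rewrite (cardsD1 (false, v) S) inS /= (cardsD1 (false, b) (S :\ (false, v))).
  rewrite !inE /= eq_sym nvb /= cardsU1.
  by rewrite add1n !addSn ltnS add0n -add1n leq_add2r leq_b1.
by move=> lt; move: le; rewrite leqNgt lt.
Qed.
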